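(* Let $H<G$ be groups and $K$ a group. Then $\ast_{H\times K}(G\times K)$ embeds into $(\ast_H G)\times K$.
   Context: For a group $G$ and subgroup $H<G$, $\ast_H G$ denotes the amalgamated free product of countably infinitely many copies of $G$ over the common subgroup $H$ (each copy containing $H$ via the given inclusion). *)

(* Defs.v *)
Set Implicit Arguments.

Record group := Group {
  carrier :> Type;
  gmul : carrier -> carrier -> carrier;
  gone : carrier;
  ginv : carrier -> carrier;
  gmulA : forall x y z, gmul x (gmul y z) = gmul (gmul x y) z;
  gmul1g : forall x, gmul gone x = x;
  gmulVg : forall x, gmul (ginv x) x = gone
}.

Arguments gmul {g}.
Arguments gone {g}.
Arguments ginv {g}.

Record hom (G1 G2 : group) := Hom {
  hfun :> G1 -> G2;
  hmul : forall x y, hfun (gmul x y) = gmul (hfun x) (hfun y)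
}.

Definition prod_group (G K : group) : group.
Proof.
refine (@Group (G * K)%type
  (fun a b => (gmul (fst a) (fst b), gmul (snd a) (snd b)))
  (gone, gone)
  (fun a => (ginv (fst a), ginv (snd a))) _ _ _).
- intros [a b] [c d] [e f]; simpl; now rewrite !gmulA.
- intros [a b]; simpl; now rewrite !gmul1g.
- intros [a b]; simpl; now rewrite !gmulVg.
Defined.

Definition hom_prod (G1 G2 K1 K2 : group) (f : hom G1 G2) (g : hom K1 K2) :
  hom (prod_group G1 K1) (prod_group G2 K2).
Proof.
refine (@Hom (prod_group G1 K1) (prod_group G2 K2)
  (fun a => (f (fst a), g (snd a))) _).
intros [a b] [c d]; simpl; now rewrite !hmul.
Defined.

Definition hom_id (G : group) : hom G G.
Proof. refine (@Hom G G (fun x => x) _). reflexivity. Defined.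

(* [P] together with the maps [j n : G -> P] (n : nat) is the amalgamated
   free product of countably infinitely many copies of G over the common
   subgroup H (embedded in G via [iota]); characterized by its universal
   property (determining it up to unique isomorphism). *)
Definition is_amalgam (H G : group) (iota : hom H G)
  (P : group) (j : nat -> hom G P) : Prop :=
  (forall n m (h : H), j n (iota h) = j m (iota h)) /\
  forall (Q : group) (f : nat -> hom G Q),
    (forall n m (h : H), f n (iota h) = f m (iota h)) ->
    exists phi : hom P Q,
      (forall n (g : G), phi (j n g) = f n g) /\
      (forall psi : hom P Q, (forall n (g : G), psi (j n g) = f n g) ->
         forall x, psi x = phi x).

Definition injective_hom (G1 G2 : group) (f : hom G1 G2) : Prop :=
  forall x y, f x = f y -> x = y.

(* Main.v *)
Require Import Defs.

Section GL.
Variable G : group.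
Lemma gmulgV (x : G) : gmul x (ginv x) = gone.
Proof.
  set (y := gmul x (ginv x)).
  assert (Hyy : gmul y y = y).
  { unfold y. rewrite <- gmulA. rewrite (gmulA _ (ginv x) x (ginv x)).
    rewrite gmulVg, gmul1g. reflexivity. }
  transitivity (gmul (ginv y) (gmul y y)).
  - rewrite gmulA, gmulVg, gmul1g. reflexivity.
  - rewrite Hyy. apply gmulVg.
Qed.
Lemma gmulg1 (x : G) : gmul x gone = x.
Proof. rewrite <- (gmulVg _ x), gmulA, gmulgV. apply gmul1g. Qed.
Lemma gcancel (a b c : G) : gmul a b = gmul a c -> b = c.
Proof.
  intros E. rewrite <- (gmul1g _ b), <- (gmul1g _ c), <- (gmulVg _ a), <- !gmulA, E.
  reflexivity.
Qed.
End GL.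
Arguments gmulgV {G}. Arguments gmulg1 {G}. Arguments gcancel {G}.

Lemma hom1 (G1 G2 : group) (f : hom G1 G2) : f gone = gone.
Proof.
  apply (gcancel (f gone)). rewrite <- hmul, gmul1g, gmulg1. reflexivity.
Qed.

Definition hom_comp (A B C : group) (g : hom B C) (f : hom A B) : hom A C.
Proof. refine (@Hom A C (fun x => g (f x)) _). intros; now rewrite !hmul. Defined.
Arguments hom_comp {A B C}.

Theorem lemma2p4 (H G K : group) (iota : hom H G)
  (iota_inj : injective_hom iota)
  (P1 : group) (j1 : nat -> hom (prod_group G K) P1)
  (HP1 : is_amalgam (hom_prod iota (hom_id K)) j1)
  (P2 : group) (j2 : nat -> hom G P2)
  (HP2 : is_amalgam iota j2) :
  exists phi : hom P1 (prod_group P2 K), injective_hom phi.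
Proof.
  destruct HP1 as [C1 U1]. destruct HP2 as [C2 U2].
  set (f := fun n => hom_prod (j2 n) (hom_id K)).
  assert (Cf : forall n m (h : prod_group H K),
    f n (hom_prod iota (hom_id K) h) = f m (hom_prod iota (hom_id K) h)).
  { intros n m [h k]. simpl. now rewrite (C2 n m h). }
  destruct (U1 _ f Cf) as [phi [Hphi _]].
  assert (gnmul : forall n (x y : G), j1 n ((gmul x y, gone) : prod_group G K)
     = gmul (j1 n ((x, gone) : prod_group G K)) (j1 n ((y, gone) : prod_group G K))).
  { intros n x y. rewrite <- hmul. simpl. now rewrite gmul1g. }
  set (gn := fun n => @Hom G P1 (fun g : G => j1 n ((g, gone) : prod_group G K)) (gnmul n)).
  assert (Cg : forall n m (h : H), gn n (iota h) = gn m (iota h)).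
  { intros n m h. simpl. exact (C1 n m ((h, gone) : prod_group H K)). }
  destruct (U2 _ gn Cg) as [alpha [Halpha Ualpha]].
  assert (kkmul : forall (x y : K), j1 0 ((gone, gmul x y) : prod_group G K)
     = gmul (j1 0 ((gone, x) : prod_group G K)) (j1 0 ((gone, y) : prod_group G K))).
  { intros x y. rewrite <- hmul. simpl. now rewrite gmul1g. }
  set (kk := @Hom K P1 (fun k : K => j1 0 ((gone, k) : prod_group G K)) kkmul).
  assert (Hk : forall n k, j1 n ((gone, k) : prod_group G K) = kk k).
  { intros n k. simpl. pose proof (C1 n 0 ((gone, k) : prod_group H K)) as E.
    simpl in E. now rewrite hom1 in E. }
  assert (comm0 : forall n g k, gmul (gn n g) (kk k) = gmul (kk k) (gn n g)).
  { intros n g k. rewrite <- (Hk n k). simpl. rewrite <- !hmul. simpl.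
    now rewrite !gmul1g, !gmulg1. }
  assert (comm : forall x k, gmul (alpha x) (kk k) = gmul (kk k) (alpha x)).
  { intros x k. set (c := kk k).
    assert (bmul : forall a b : P2,
      gmul c (gmul (alpha (gmul a b)) (ginv c)) =
      gmul (gmul c (gmul (alpha a) (ginv c))) (gmul c (gmul (alpha b) (ginv c)))).
    { intros a b. rewrite hmul. rewrite <- !gmulA. f_equal. f_equal.
      rewrite (gmulA _ (ginv c) c), gmulVg, gmul1g. reflexivity. }
    set (beta := @Hom P2 P1 _ bmul).
    assert (Hb : forall n g, beta (j2 n g) = gn n g).
    { intros n g. simpl. rewrite Halpha. rewrite gmulA.
      unfold c. rewrite <- comm0, <- gmulA, gmulgV, gmulg1. reflexivity. }
    pose proof (Ualpha beta Hb x) as E. simpl in E.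
    transitivity (gmul (gmul c (gmul (alpha x) (ginv c))) c).
    { now rewrite E. }
    rewrite <- !gmulA, gmulVg, gmulg1. reflexivity. }
  assert (pmul : forall a b : prod_group P2 K,
    gmul (alpha (fst (gmul a b))) (kk (snd (gmul a b))) =
    gmul (gmul (alpha (fst a)) (kk (snd a))) (gmul (alpha (fst b)) (kk (snd b)))).
  { intros [a1 a2] [b1 b2]. simpl fst; simpl snd.
    rewrite (hmul alpha), (hmul kk). rewrite <- !gmulA. f_equal.
    rewrite !gmulA. f_equal. apply comm. }
  set (psi := @Hom (prod_group P2 K) P1 _ pmul).
  destruct (U1 _ j1 C1) as [id0 [_ Uid]].
  assert (Hc : forall n g, hom_comp psi phi (j1 n g) = j1 n g).
  { intros n [g k]. simpl. rewrite Hphi. simpl. rewrite Halpha. simpl.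
    transitivity (gmul (j1 n ((g, gone) : prod_group G K)) (j1 n ((gone, k) : prod_group G K))).
    { f_equal. symmetry. exact (Hk n k). }
    rewrite <- hmul. simpl. now rewrite gmul1g, gmulg1. }
  assert (Hi : forall n g, hom_id P1 (j1 n g) = j1 n g) by reflexivity.
  exists phi. intros x y E.
  pose proof (Uid _ Hc x) as Ex. pose proof (Uid _ Hc y) as Ey.
  pose proof (Uid _ Hi x) as Ix. pose proof (Uid _ Hi y) as Iy.
  simpl in Ex, Ey, Ix, Iy. rewrite E in Ex. congruence.
Qed.
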